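(* Let $\{T_v\}$ be an extended $(n,d)$-tope arrangement. For each lattice point $u$ of $(n-1)\Delta^{d-1}$ let $\mathbb T(u)=\bigcup_{\bar j\in[\bar d]}T_{u+e_{\bar j}}$. Suppose that for every lattice point $w$ of $(n+1)\Delta^{d-1}$ the graph $\bigcup_{\bar j:\,w_{\bar j}\ge1}T_{w-e_{\bar j}}$ is acyclic. Then for every lattice point $u$ of $(n-1)\Delta^{d-1}$, every tope $T$ whose graph is a subgraph of $\mathbb T(u)$ belongs to the arrangement, i.e. $T=T_v$ where $v=RD(T)$.
   Context: Fix positive integers $n,d$; graphs are subgraphs of the complete bipartite graph with left vertices $[n]$ and right vertices $[\bar d]=\{\bar1,\dots,\bar d\}$, identified with edge sets. $RD$ is the vector of right-vertex degrees; $e_{\bar j}$ a unit vector; lattice points of $k\Delta^{d-1}$ are vectors in $\mathbb Z_{\ge0}^{[\bar d]}$ with coordinate sum $k$. Two acyclic graphs are compatible if whenever both contain a perfect matching between the same $I\subseteq[n]$, $\bar J\subseteq[\bar d]$, these matchings coincide. A tope is a map $T:[n]\to[\bar d]$ (graph $\{(i,T(i))\}$), with position $RD(T)$. An extended $(n,d)$-tope arrangement is a collection of pairwise compatible topes $T_v$, one for each lattice point $v$ of $n\Delta^{d-1}$, with $RD(T_v)=v$. *)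

(* Defs.v *)
From mathcomp Require Import all_boot.
Set Implicit Arguments. Unset Strict Implicit. Unset Printing Implicit Defensive.

(* Left vertices [n] = 'I_n, right vertices [d-bar] = 'I_d.
   A graph is a set of edges (i, j) of the complete bipartite graph. *)
Definition bgraph (n d : nat) := {set 'I_n * 'I_d}.

Definition rvec (d : nat) := {ffun 'I_d -> nat}.

Definition RD n d (G : bgraph n d) : rvec d :=
  [ffun j => #|[set i | (i, j) \in G]|].

Definition unitv d (j : 'I_d) : rvec d := [ffun k => (k == j : nat)].
Definition addv d (u v : rvec d) : rvec d := [ffun k => u k + v k].
Definition subv d (u v : rvec d) : rvec d := [ffun k => u k - v k].

(* Lattice point of k * Delta^{d-1}. *)
Definition lattice_pt d (k : nat) (v : rvec d) : Prop := \sum_(j < d) v j = k.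

Definition adj n d (G : bgraph n d) : rel ('I_n + 'I_d) :=
  fun x y => match x, y with
             | inl i, inr j => (i, j) \in G
             | inr j, inl i => (i, j) \in G
             | _, _ => false
             end.

Definition acyclic n d (G : bgraph n d) : Prop :=
  forall s : seq ('I_n + 'I_d), uniq s -> 3 <= size s -> ~~ cycle (adj G) s.

Definition perfect_matching n d (I : {set 'I_n}) (J : {set 'I_d})
  (M : bgraph n d) : Prop :=
  [/\ M \subset setX I J,
      forall i, i \in I -> #|[set j | (i, j) \in M]| = 1
    & forall j, j \in J -> #|[set i | (i, j) \in M]| = 1].

Definition compatible n d (G1 G2 : bgraph n d) : Prop :=
  [/\ acyclic G1, acyclic G2 &
      forall (I : {set 'I_n}) (J : {set 'I_d}) (M1 M2 : bgraph n d),
        M1 \subset G1 -> M2 \subset G2 ->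
        perfect_matching I J M1 -> perfect_matching I J M2 -> M1 = M2].

Definition tope (n d : nat) := {ffun 'I_n -> 'I_d}.
Definition tgraph n d (T : tope n d) : bgraph n d := [set (i, T i) | i : 'I_n].

(* An extended (n,d)-tope arrangement, given as a map A from vectors to topes
   (only its values at lattice points of n Delta^{d-1} matter). *)
Definition ext_tope_arrangement n d (A : rvec d -> tope n d) : Prop :=
  (forall v, lattice_pt n v -> RD (tgraph (A v)) = v) /\
  (forall v w, lattice_pt n v -> lattice_pt n w ->
     compatible (tgraph (A v)) (tgraph (A w))).

(* Main.v *)
Require Import Defs.
From mathcomp Require Import all_boot zify.
Set Implicit Arguments. Unset Strict Implicit. Unset Printing Implicit Defensive.

Definition cnt n d (T : tope n d) (j : 'I_d) : nat := \sum_(i : 'I_n) (T i == j).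

Lemma RD_tgraph n d (T : tope n d) j : RD (tgraph T) j = cnt T j.
Proof.
rewrite /RD ffunE /cnt -sum1dep_card big_mkcond /=; apply: eq_bigr => i _.
have -> : ((i, j) \in tgraph T) = (T i == j).
  apply/imsetP/eqP => [[i' _ [-> ->]] //|<-]; by exists i.
by case: (T i == j).
Qed.

Lemma in_tgraph n d (T : tope n d) i : (i, T i) \in tgraph T.
Proof. by apply/imsetP; exists i. Qed.

Lemma tgraph_sub n d (T : tope n d) (G : bgraph n d) :
  (forall i, (i, T i) \in G) -> tgraph T \subset G.
Proof. by move=> H; apply/subsetP => x /imsetP[i _ ->]. Qed.

Lemma sub_tgraph n d (T : tope n d) (G : bgraph n d) :
  tgraph T \subset G -> forall i, (i, T i) \in G.
Proof. by move=> /subsetP H i; apply/H/in_tgraph. Qed.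

Lemma core n d (G : bgraph n d) (X Y : tope n d) (E : {set 'I_n}) l0 :
  acyclic G -> (forall i, (i, X i) \in G) -> (forall i, (i, Y i) \in G) ->
  (forall l, l \in E -> X l != Y l) ->
  (forall l, l \in E -> exists2 l', l' \in E & Y l' = X l) ->
  l0 \in E -> False.
Proof.
move=> Hac HX HY HE Hw l0E.
pose S := [set r | [exists l in E, Y l == r]].
pose g (r : 'I_d) := if [pick l in E | Y l == r] is Some l then l else l0.
have gP r : r \in S -> g r \in E /\ Y (g r) = r.
  rewrite inE /g => /existsP[l /andP[lE /eqP Yl]].
  case: pickP => [l' /andP[l'E /eqP]|/(_ l)] //; last by rewrite lE Yl eqxx.
pose h r := X (g r).
have hS r : r \in S -> h r \in S.
  move=> /gP[gE _]; have [l' l'E Yl'] := Hw _ gE.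
  by rewrite inE; apply/existsP; exists l'; rewrite l'E Yl' eqxx.
have iterS k r : r \in S -> iter k h r \in S.
  by move=> rS; elim: k => //= k IH; apply: hS.
pose r0 := Y l0.
have r0S : r0 \in S by rewrite inE; apply/existsP; exists l0; rewrite l0E eqxx.
have exq : exists q, looping h r0 q by exists (fingraph.order h r0); apply: fingraph.looping_order.
pose q := ex_minn exq.
have Hq : looping h r0 q by rewrite /q; case: ex_minnP.
have Hqmin : forall q', looping h r0 q' -> q <= q' by rewrite /q; case: ex_minnP.
have q0 : 0 < q by case: (q) Hq.
have Uq : uniq (traject h r0 q).
  move: Hq Hqmin q0; case: q => // q' _ Hm _; rewrite looping_uniq.
  by apply/negP => /Hm; rewrite ltnn.
have /trajectP[p ltpq Hpq] : iter q h r0 \in traject h r0 q by [].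
pose y := iter p h r0.
pose k := q - p.
have Hqpk : q = p + k by rewrite /k subnKC // ltnW.
have yS : y \in S by apply: iterS.
have Hcyc : iter k h y = y by rewrite /y -iterD addnC -Hqpk.
have Uk : uniq (traject h y k).
  by move: Uq; rewrite Hqpk trajectD cat_uniq => /and3P[_ _].
have k0 : 0 < k by rewrite /k subn_gt0.
have k1 : k != 1.
  apply/eqP => k1; move: Hcyc; rewrite k1 /= /h.
  have [gE Yg] := gP _ yS; move: (HE _ gE); rewrite Yg => /eqP; done.
pose f (r : 'I_d) : seq ('I_n + 'I_d) := [:: inr r; inl (g r)].
pose s := flatten (map f (traject h y k)).
have Hpath : forall m z, z \in S ->
  path (adj G) (inr z) (rcons (behead (flatten (map f (traject h z m.+1)))) (inr (iter m.+1 h z))).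
  elim=> [|m IH] z zS.
    have [gE Yg] := gP _ zS.
    apply/and3P; split => //; [by have := HY (g z); rewrite Yg | exact: HX].
  have [gE Yg] := gP _ zS.
  have := IH (h z) (hS _ zS); rewrite -iterSr.
  rewrite trajectS /= => /andP[-> ->]; rewrite andbT.
  rewrite /h HX andbT andbT; by have := HY (g z); rewrite Yg.
have trS : all (mem S) (traject h y k).
  apply/allP => r /trajectP[i _ ->]; exact: iterS.
have Hsize : forall t : seq 'I_d, size (flatten (map f t)) = (size t).*2.
  by elim=> //= r t IH; rewrite IH doubleS.
have Huniq : forall t : seq 'I_d, all (mem S) t -> uniq t -> uniq (flatten (map f t)).
  elim=> //= r t IH /andP[rS tS] /andP[rt ut].
  rewrite IH // andbT in_cons negb_or -andbA; apply/and3P; split.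
  - by [].
  - apply/flatten_mapP => -[r' r't]; rewrite !inE => /orP[/eqP[] rr|/eqP//].
    by move: rt; rewrite rr r't.
  - apply/flatten_mapP => -[r' r't]; rewrite !inE => /orP[/eqP//|/eqP[] gg].
    have [_ Y1] := gP _ rS; have [_ Y2] := gP r' (allP tS _ r't).
    by move: rt; rewrite -Y1 gg Y2 r't.
have := Hac s (Huniq _ trS Uk).
have [k' Ek] : exists k', k = k'.+2.
  by move: k0 k1; case Ek: k => [|[|k']] // _ _; exists k'.
rewrite /s Hsize size_traject Ek.
move=> /(_ isT); apply/negP/negPn.
rewrite Ek in Hcyc.
by rewrite trajectS /=; have := Hpath k'.+1 y yS; rewrite Hcyc.
Qed.

Lemma cntE n d (T : tope n d) j : cnt T j = #|[set i | T i == j]|.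
Proof. by rewrite /cnt -sum1dep_card [RHS]big_mkcond /=; apply: eq_bigr => i _; case: (T i == j). Qed.

Lemma lemU n d (G : bgraph n d) (X Y : tope n d) (b c : 'I_d) l0 :
  acyclic G -> (forall i, (i, X i) \in G) -> (forall i, (i, Y i) \in G) ->
  (forall j, cnt X j + (j == c) = cnt Y j + (j == b)) ->
  X l0 != Y l0 -> Y l0 = b -> False.
Proof.
move=> Hac HX HY Hcnt Hl0 Yl0.
apply: (@core n d G X Y [set l | X l != Y l] l0 Hac HX HY); last by rewrite inE.
  by move=> l; rewrite inE.
move=> l; rewrite inE => Hl.
have [->|Hb] := eqVneq (X l) b; first by exists l0; rewrite ?inE.
case: (boolP [exists l', (X l' != Y l') && (Y l' == X l)]).
  by move=> /existsP[l' /andP[H1 /eqP H2]]; exists l'; rewrite ?inE.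
move=> /existsPn Hn; exfalso.
have Hsub : [set i | Y i == X l] \proper [set i | X i == X l].
  apply/properP; split.
    apply/subsetP => i; rewrite !inE => /eqP Yi.
    have := Hn i; rewrite Yi eqxx andbT negbK => /eqP ->//.
  by exists l; rewrite !inE ?eqxx // eq_sym.
have := proper_card Hsub; rewrite -!cntE.
have := Hcnt (X l); rewrite (negbTE Hb) addn0 => <-.
by rewrite ltnNge leq_addr.
Qed.

Lemma lemAlt n d (G : bgraph n d) (X Y : tope n d) :
  acyclic G -> (forall i, (i, X i) \in G) -> (forall i, (i, Y i) \in G) ->
  (forall j, cnt X j = cnt Y j) -> X = Y.
Proof.
move=> Hac HX HY Hc; apply/ffunP => i; apply/eqP; apply/negPn/negP => Hi.
apply: (@lemU n d G X Y (Y i) (Y i) i Hac HX HY) => // j.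
by rewrite Hc.
Qed.

Definition Hg n d (A : rvec d -> tope n d) (w : rvec d) : bgraph n d :=
  \bigcup_(j : 'I_d | 1 <= w j) tgraph (A (subv w (unitv j))).

Lemma sum_unit d (x : 'I_d) : \sum_(j < d) (j == x : nat) = 1.
Proof. by rewrite (bigD1 x) //= eqxx big1 // => j /negbTE ->. Qed.

Lemma sum_cnt n d (T : tope n d) : \sum_(j < d) cnt T j = n.
Proof.
rewrite /cnt exchange_big /= -[RHS]card_ord -sum1_card; apply: eq_bigr => i _.
rewrite -(sum_unit (T i)); apply: eq_bigr => j _; by rewrite eq_sym.
Qed.

Lemma Hsub n d (A : rvec d -> tope n d) (w s : rvec d) (x : 'I_d) :
  (forall j, s j + (j == x) = w j) -> forall i, (i, A s i) \in Hg A w.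
Proof.
move=> Hs i.
have -> : s = subv w (unitv x).
  by apply/ffunP => j; rewrite !ffunE -Hs addnK.
apply/bigcupP; exists x; last exact: in_tgraph.
by rewrite -Hs eqxx addn1.
Qed.

Lemma GP n d (A : rvec d -> tope n d) (w : rvec d) (x : 'I_d) (T : tope n d) :
  (forall v, lattice_pt n v -> RD (tgraph (A v)) = v) ->
  acyclic (Hg A w) -> lattice_pt n.+1 w ->
  (forall j, cnt T j + (j == x) = w j) -> (forall i, (i, T i) \in Hg A w) ->
  T = A (RD (tgraph T)).
Proof.
move=> HA Hac Hw Hc HT.
set s := RD (tgraph T).
have sE j : s j = cnt T j by rewrite /s RD_tgraph.
have Hs : lattice_pt n s.
  move: Hw; rewrite /lattice_pt (eq_bigr _ (fun j _ => esym (Hc j))) big_split /=.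
  rewrite sum_unit addn1 => -[<-]; apply: eq_bigr => j _; exact: sE.
apply: (lemAlt Hac HT).
  apply: (@Hsub n d A w s x) => j; by rewrite sE.
move=> j; by rewrite -[cnt (A s) j]RD_tgraph HA // sE.
Qed.

Definition upd n d (T : tope n d) (l : 'I_n) (z : 'I_d) : tope n d :=
  [ffun i => if i == l then z else T i].

Lemma cnt_upd n d (T : tope n d) l z j :
  cnt (upd T l z) j + (T l == j) = cnt T j + (z == j).
Proof.
rewrite /cnt (bigD1 l) //= [in RHS](bigD1 l) //= ffunE eqxx.
have -> : \sum_(i < n | i != l) (upd T l z i == j) = \sum_(i < n | i != l) (T i == j).
  by apply: eq_bigr => i /negbTE Hi; rewrite ffunE Hi.
move: (nat_of_bool (z == j)) (nat_of_bool (T l == j)) (\sum_(i < n | i != l) (T i == j)) => a b c'.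
lia.
Qed.

Definition Qt n d (A : rvec d -> tope n d) (u : rvec d) (c : 'I_d) := A (addv u (unitv c)).

Lemma cntQ n d (A : rvec d -> tope n d) u c j :
  (forall v, lattice_pt n v -> RD (tgraph (A v)) = v) -> 0 < n -> lattice_pt n.-1 u ->
  cnt (Qt A u c) j = u j + (j == c).
Proof.
move=> HA n0 Hu; rewrite -RD_tgraph /Qt HA ?ffunE //.
rewrite /lattice_pt.
have -> : \sum_(j < d) addv u (unitv c) j = \sum_(j < d) (u j + (j == c)) by apply: eq_bigr => k _; rewrite !ffunE.
rewrite big_split /= sum_unit.
by move: Hu; rewrite /lattice_pt => ->; lia.
Qed.

Definition w2 d (u : rvec d) (b c : 'I_d) : rvec d := [ffun j => u j + (j == b) + (j == c)].

Lemma w2_lat n d (u : rvec d) b c : 0 < n -> lattice_pt n.-1 u -> lattice_pt n.+1 (w2 u b c).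
Proof.
move=> n0 Hu; rewrite /lattice_pt.
have -> : \sum_(j < d) w2 u b c j = \sum_(j < d) (u j + (j == b) + (j == c)) by apply: eq_bigr => k _; rewrite !ffunE.
rewrite !big_split /= !sum_unit.
by move: Hu; rewrite /lattice_pt => ->; lia.
Qed.

Lemma Q_in n d (A : rvec d -> tope n d) u b c i :
  (i, Qt A u b i) \in Hg A (w2 u b c).
Proof. by apply: (@Hsub n d A _ _ c) => j; rewrite !ffunE. Qed.

Lemma Q_in' n d (A : rvec d -> tope n d) u b c i :
  (i, Qt A u c i) \in Hg A (w2 u b c).
Proof. by apply: (@Hsub n d A _ _ b) => j; rewrite !ffunE addnAC. Qed.

Lemma lemNL n d (A : rvec d -> tope n d) u :
  (forall v, lattice_pt n v -> RD (tgraph (A v)) = v) ->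
  (forall w, lattice_pt n.+1 w -> acyclic (Hg A w)) ->
  0 < n -> lattice_pt n.-1 u ->
  forall c l, Qt A u (Qt A u c l) l = Qt A u c l.
Proof.
move=> HA Hacyc n0 Hu c l; set b := Qt A u c l.
apply/eqP/negPn/negP => Hb.
apply: (@lemU n d (Hg A (w2 u b c)) (Qt A u b) (Qt A u c) b c l) => //.
- exact: Hacyc (w2_lat _ _ n0 Hu).
- by move=> i; apply: Q_in.
- by move=> i; apply: Q_in'.
- by move=> j; rewrite !cntQ //; lia.
Qed.

Lemma lemADJ n d (A : rvec d -> tope n d) u :
  (forall v, lattice_pt n v -> RD (tgraph (A v)) = v) ->
  (forall w, lattice_pt n.+1 w -> acyclic (Hg A w)) ->
  0 < n -> lattice_pt n.-1 u ->
  forall y y' l l', Qt A u y l = y -> Qt A u y' l = y' -> l' != l ->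
  Qt A u y l' = Qt A u y' l'.
Proof.
move=> HA Hacyc n0 Hu y y' l l' Hy Hy' Hl.
have E : upd (Qt A u y) l y' = Qt A u y'.
  apply: (@lemAlt n d (Hg A (w2 u y y'))).
  - exact: Hacyc (w2_lat _ _ n0 Hu).
  - move=> i; rewrite ffunE; case: eqP => [->|_]; last exact: Q_in.
    by have := @Q_in' n d A u y y' l; rewrite Hy'.
  - by move=> i; apply: Q_in'.
  - move=> j; have := cnt_upd (Qt A u y) l y' j.
    rewrite !cntQ // Hy [y == j]eq_sym [y' == j]eq_sym; lia.
by rewrite -E ffunE (negbTE Hl).
Qed.

Lemma main_claim n d (A : rvec d -> tope n d) u :
  (forall v, lattice_pt n v -> RD (tgraph (A v)) = v) ->
  (forall w, lattice_pt n.+1 w -> acyclic (Hg A w)) ->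
  0 < n -> lattice_pt n.-1 u ->
  forall m (k : 'I_d) (T : tope n d),
    (forall l, Qt A u (T l) l = T l) ->
    #|[set l | T l != Qt A u k l]| <= m -> T = A (RD (tgraph T)).
Proof.
move=> HA Hacyc n0 Hu.
have NL := lemNL HA Hacyc n0 Hu.
have ADJ := lemADJ HA Hacyc n0 Hu.
have cQ : forall c j, cnt (Qt A u c) j = u j + (j == c) by move=> c j; apply: cntQ.
set Q := Qt A u in NL ADJ cQ *.
pose dl (k a : 'I_d) := #|[set l | Q a l != Q k l]|.
have D2 : forall k m a l, dl k a <= m -> Q a l != Q k l -> dl k (Q k l) < dl k a.
  move=> k; elim=> [|m IH] a l Ha Hl.
    by move: Ha; rewrite leqn0 => /eqP/cards0_eq/setP/(_ l); rewrite !inE Hl.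
  have [l0 /andP[/eqP Hal0 Hkl0]] : exists l0, (Q a l0 == a) && (Q k l0 != a).
    case: (boolP [exists l0, (Q a l0 == a) && (Q k l0 != a)]) => [/existsP//|/existsPn Hn].
    exfalso.
    have Hs : [set i | Q a i == a] \subset [set i | Q k i == a].
      apply/subsetP => i; rewrite !inE => Hi; have := Hn i.
      by rewrite Hi /= negbK.
    have := subset_leq_card Hs; rewrite -!cntE !cQ eqxx.
    have -> : (a == k) = false.
      apply/negbTE; apply/negP => /eqP Eak; move: Hl; rewrite Eak eqxx //.
    by rewrite addn0 addn1 ltnn.
  set a1 := Q k l0.
  have Ha1 : Q a1 l0 = a1 by rewrite /a1 NL.
  have Hadj : forall l', l' != l0 -> Q a l' = Q a1 l'.
    by move=> l' Hl'; apply: (ADJ _ _ l0).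
  have Eset : [set l | Q a l != Q k l] = l0 |: [set l | Q a1 l != Q k l].
    apply/setP => l'; rewrite !inE; case: (eqVneq l' l0) => [->|Hl'] /=.
      by rewrite Hal0 eq_sym.
    by rewrite Hadj.
  have Hn0 : l0 \notin [set l | Q a1 l != Q k l] by rewrite inE Ha1 negbK.
  have Edl : dl k a = (dl k a1).+1 by rewrite /dl Eset cardsU1 Hn0.
  have [Ell0|Hll0] := eqVneq l l0; first by rewrite Ell0 Edl.
  rewrite Edl ltnS; apply: ltnW; apply: IH; first by rewrite -ltnS -Edl.
  by rewrite -Hadj.
elim=> [|m IH] k T HT Hm.
  have ET : T = Q k.
    apply/ffunP => l; apply/eqP; apply/negPn/negP => Hl.
    by move: Hm; rewrite leqn0 => /eqP/cards0_eq/setP/(_ l); rewrite !inE Hl.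
  have -> : RD (tgraph T) = addv u (unitv k).
    by apply/ffunP => j; rewrite RD_tgraph ET cQ !ffunE.
  by rewrite ET.
set D := [set l | T l != Q k l] in Hm.
have [Hm'|Hm'] := leqP #|D| m; first exact: IH Hm'.
have HD : #|D| = m.+1 by apply/eqP; rewrite eqn_leq Hm Hm'.
have [i0 i0D] : exists i0, i0 \in D.
  by apply/card_gt0P; rewrite HD.
case: (@arg_minnP _ i0 (fun l => l \in D) (fun i => dl k (Q k i)) i0D) => i iD Hmin.
set a := Q k i. set b := T i.
have Hba : b != a by move: iD; rewrite /D inE.
have Qaa : Q a i = a by rewrite /a NL.
have Qbb : Q b i = b by rewrite /b HT.
set S := upd T i a.
have HS : forall l, Q (S l) l = S l.
  by move=> l; rewrite /S ffunE; case: eqP => [->|_]; [exact: Qaa | exact: HT].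
have DS : [set l | S l != Q k l] = D :\ i.
  apply/setP => l; rewrite !inE /S ffunE; case: (eqVneq l i) => [->|li] /=.
    by rewrite /a eqxx.
  by [].
have cDi : #|D :\ i| = m by move: HD; rewrite (cardsD1 i) iD add1n => -[].
have ES : S = A (RD (tgraph S)) by apply: (IH k) => //; rewrite DS cDi.
set W : tope n d := [ffun l => if (l \in D) && (l != i) then T l else Q b l].
have HW : forall l, Q (W l) l = W l.
  by move=> l; rewrite /W ffunE; case: ifP => _; [exact: HT | exact: NL].
have Wi : W i = b by rewrite /W ffunE eqxx andbF.
have DW : [set l | W l != Q b l] \subset D :\ i.
  apply/subsetP => l; rewrite !inE /W ffunE.
  by case: ifP => [/andP[lD ->] /= _|_]; [move: lD; rewrite /D inE | rewrite eqxx].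
have EW : W = A (RD (tgraph W)).
  by apply: (IH b) => //; rewrite -cDi; apply: subset_leq_card.
have Key : forall l, l \in D -> l != i -> Q b l = Q k l.
  move=> l lD li.
  have -> : Q b l = Q a l by apply: (ADJ _ _ i) => //.
  apply/eqP/negPn/negP => Hl.
  have := D2 k _ a l (leqnn _) Hl.
  by rewrite /a ltnNge Hmin.
have cnt_WS : forall j, cnt W j + (j == k) = cnt S j + (j == b).
  move=> j.
  have P1 : forall l, (W l == j) + (Q k l == j) = (S l == j) + (Q b l == j).
    move=> l; rewrite /W /S !ffunE.
    case: ifP => [/andP[lD li]|Hl].
      by rewrite (negbTE li) Key // addnC.
    case: (eqVneq l i) => [Eli|Nli].
      by rewrite Eli addnC.
    have lD : l \notin D by move: Hl; rewrite Nli andbT => ->.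
    move: lD; rewrite /D inE negbK => /eqP TE; by rewrite TE addnC.
  have P2 : \sum_(l < n) ((W l == j) + (Q k l == j)) = \sum_(l < n) ((S l == j) + (Q b l == j)).
    by apply: eq_bigr => l _; exact: P1.
  move: P2; rewrite !big_split /= -/(cnt W j) -/(cnt S j).
  rewrite -/(cnt (Q k) j) -/(cnt (Q b) j) !cQ.
  move: (cnt W j) (cnt S j) (u j) (nat_of_bool (j == k)) (nat_of_bool (j == b)) => x1 x2 x3 x4 x5.
  lia.
pose w : rvec d := [ffun j => cnt S j + (j == b)].
have Hwlat : lattice_pt n.+1 w.
  rewrite /lattice_pt.
  have -> : \sum_(j < d) w j = \sum_(j < d) (cnt S j + (j == b)) by apply: eq_bigr => j _; rewrite ffunE.
  by rewrite big_split /= sum_cnt sum_unit addn1.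
have ET : T = upd S i b.
  apply/ffunP => l; rewrite /S !ffunE; case: eqP => [->|] //.
apply: (@GP n d A w a T HA (Hacyc w Hwlat) Hwlat).
  move=> j; rewrite ffunE ET.
  have := cnt_upd S i b j; rewrite {2}/S ffunE eqxx [a == j]eq_sym [b == j]eq_sym.
  by [].
move=> l; case: (eqVneq l i) => [->|li].
  rewrite -/b -Wi EW.
  apply: (@Hsub n d A w _ k) => j; rewrite RD_tgraph ffunE cnt_WS //.
have -> : T l = S l by rewrite /S ffunE (negbTE li).
rewrite ES; apply: (@Hsub n d A w _ b) => j; rewrite RD_tgraph ffunE //.
Qed.

Theorem mainTheorem10 (n d : nat) (A : rvec d -> tope n d) :
  0 < n -> 0 < d ->
  ext_tope_arrangement A ->
  (forall w : rvec d, lattice_pt n.+1 w ->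
     acyclic (\bigcup_(j : 'I_d | 1 <= w j) tgraph (A (subv w (unitv j))))) ->
  forall u : rvec d, lattice_pt n.-1 u ->
  forall T : tope n d,
    tgraph T \subset \bigcup_(j : 'I_d) tgraph (A (addv u (unitv j))) ->
    T = A (RD (tgraph T)).
Proof.
move=> n0 d0 [HA _] Hacyc u Hu T HT.
have Hac' : forall w, lattice_pt n.+1 w -> acyclic (Hg A w) by exact: Hacyc.
apply: (@main_claim n d A u HA Hac' n0 Hu _ (Ordinal d0) T) => //.
move=> l; have := sub_tgraph HT l => /bigcupP[j _ /imsetP[i _ [Eli ->]]].
by rewrite Eli; apply: (lemNL HA Hac' n0 Hu).
Qed.
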